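(* Fix $m\in\mathbb{Z}^+$. Let $f,g\colon X\to \mathbb{Z}$ be functions on a finite set $X$. For $k\in\mathbb{Z}$ and $l\in\mathbb{Z}_{2m}$, let $W_k(l)=\{x\in X\colon kf(x)\equiv l \pmod{2m}\}$. If $$\sum_{x\in W_k(l)}g(x)=\sum_{x\in W_k(l+m)}g(x)\qquad\text{for every } l\in\mathbb{Z}_m$$ holds for $k=1$, then it holds for every odd integer $k$.
   Context: $\mathbb{Z}_m$ denotes the residues $\{0,1,\dots,m-1\}$. *)

(* Defs.v *)
From mathcomp Require Import all_boot all_order all_algebra.
Set Implicit Arguments. Unset Strict Implicit. Unset Printing Implicit Defensive.
Import GRing.Theory Num.Theory.
Local Open Scope ring_scope.

Definition W (X : finType) (m : nat) (f : X -> int) (k l : int) : {set X} :=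
  [set x | ((k * f x)%R == l %[mod (2 * m)%N%:Z])%Z].

Definition balanced (X : finType) (m : nat) (f g : X -> int) (k : int) : Prop :=
  forall l : 'I_m,
    \sum_(x in W m f k (l%:Z)) g x = \sum_(x in W m f k ((l + m)%N%:Z)) g x.

(* Main.v *)
Require Import Defs.
From mathcomp Require Import all_boot all_order all_algebra.
From mathcomp Require Import zify ring.
Local Open Scope ring_scope.
Import GRing.Theory Num.Theory.

Section Aux.
Variables (m n : nat) (Hn : (2 * m)%N = n.+1) (X : finType) (f g : X -> int).

Local Notation N := ((2 * m)%N%:Z : int).

Lemma N0 : N != 0. Proof. by rewrite Hn. Qed.
Lemma Npos : 0 < N. Proof. by rewrite Hn. Qed.

Definition p (x : X) : 'I_n.+1 := inord `|(f x %% N)%Z|%N.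

Lemma pE x : ((p x : nat) : int) = (f x %% N)%Z.
Proof.
have h0 := modz_ge0 (f x) N0.
have h1 := ltz_pmod (f x) Npos.
rewrite /p inordK; first by rewrite gez0_abs.
have : `|(f x %% N)%Z|%N < (2 * m)%N :> int by rewrite gez0_abs.
by rewrite ltz_nat Hn.
Qed.

Lemma pB (k l : int) x :
  ((k * f x)%R == l %[mod N])%Z = ((k * (p x : nat)%:Z)%R == l %[mod N])%Z.
Proof. rewrite pE. Fail Fail idtac. rewrite modzMmr. done. Qed.

Definition T (j : 'I_n.+1) := \sum_(x | p x == j) g x.

Lemma sumC (k l : int) :
  \sum_(x in W m f k l) g x = \sum_(j : 'I_n.+1 | ((k * (j : nat)%:Z)%R == l %[mod N])%Z) T j.
Proof.
rewrite (partition_big p (fun j : 'I_n.+1 => ((k * (j : nat)%:Z)%R == l %[mod N])%Z)).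
  apply: eq_bigr => j Hj; apply: eq_bigl => x.
  rewrite /W inE.
  rewrite (pB k l x); have [->|_] := eqVneq (p x) j; by rewrite ?Hj ?andbF.
by move=> x; rewrite inE pB.
Qed.

Lemma sumE (l : nat) : (l < 2 * m)%N ->
  \sum_(x in W m f 1 l%:Z) g x = T (inord l).
Proof.
move=> hl; rewrite sumC (big_pred1 (inord l)) // => j /=.
have hl' : (l < n.+1)%N by rewrite -Hn.
rewrite mul1r !modz_nat !modn_small ?Hn //.
apply/eqP/eqP => [/eqP|->]; last by rewrite inordK.
by rewrite eqz_nat => /eqP e; apply: val_inj; rewrite /= inordK.
Qed.

Definition h (j : 'I_n.+1) : 'I_n.+1 := inord ((j + m) %% (2 * m)).

Lemma hval (j : 'I_n.+1) :
  (h j : nat) = (if (j < m)%N then j + m else j - m)%N.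
Proof.
have hj := ltn_ord j.
rewrite /h inordK; last first.
  have : (0 < 2 * m)%N by rewrite Hn.
  move=> /(ltn_pmod (j + m)); lia.
case: ifP => hjm; first by rewrite modn_small //; lia.
have -> : (j + m = (j - m) + 2 * m)%N by lia.
rewrite modnDr modn_small //; lia.
Qed.

Lemma h_inj : injective h.
Proof.
move=> a b e; apply: val_inj; have := congr1 (@nat_of_ord _) e; rewrite !hval /=.
have := ltn_ord a; have := ltn_ord b.
case: ifP; case: ifP; lia.
Qed.

Hypothesis hb : balanced m f g 1.

Lemma Th (j : 'I_n.+1) : T (h j) = T j.
Proof.
have hj := ltn_ord j.
have hjm : (j < 2 * m)%N by rewrite Hn.
case: (ltnP j m) => c.
  have := hb (Ordinal c); rewrite sumE /=; last by lia.
  rewrite sumE /=; last by lia.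
  move=> E; rewrite -[X in _ = T X]inord_val E; congr T; apply: val_inj; rewrite /= hval c inordK //; lia.
have c' : (j - m < m)%N by lia.
have := hb (Ordinal c'); rewrite sumE /=; last by lia.
rewrite sumE /=; last by lia.
have -> : (j - m + m = j)%N by lia.
move=> E; rewrite -[X in _ = T X]inord_val -E; congr T; apply: val_inj; rewrite /= hval.
have -> : (j < m)%N = false by lia.
rewrite inordK //; lia.
Qed.

Lemma hG (k l : int) (j : 'I_n.+1) : ~~ (2%:Z %| k)%Z ->
  ((k * (h j : nat)%:Z)%R == l + m%:Z %[mod N])%Z =
  ((k * (j : nat)%:Z)%R == l %[mod N])%Z.
Proof.
move=> hk.
have hk1 : (k %% 2)%Z = 1.
  have h0 := modz_ge0 k (isT : (2%:Z) != 0).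
  have h1 := ltz_pmod k (isT : 0 < 2%:Z).
  have : (k %% 2)%Z != 0 by apply: contra hk => /eqP/dvdz_mod0P.
  lia.
have ek := divz_eq k 2; rewrite hk1 in ek.
set q := (k %/ 2)%Z in ek.
have [c ec] : exists c : int, (h j : nat)%:Z = (j : nat)%:Z + m%:Z - N * c.
  rewrite hval; case: ifP => hjm.
    by exists 0; rewrite PoszD mulr0 subr0.
  exists 1; move: hjm; lia.
rewrite !eqz_mod_dvd ec.
have -> : k * ((j : nat)%:Z + m%:Z - N * c) - (l + m%:Z) =
  (k * (j : nat)%:Z - l) + N * (q - k * c).
  rewrite PoszM ek; ring.
by rewrite rpredDr // dvdz_mulr // dvdzz.
Qed.

End Aux.

Theorem lemma4p6 (m : nat) (X : finType) (f g : X -> int) :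
  (0 < m)%N ->
  balanced m f g 1 ->
  forall k : int, ~~ (2%:Z %| k)%Z -> balanced m f g k.
Proof.
move=> m0 hb k hk l.
have Hn : (2 * m)%N = (2 * m).-1.+1 by lia.
have H2m : (2 * m = (2 * m).-1.+1)%N by lia.
rewrite (@sumC m _ H2m X f g) (@sumC m _ H2m X f g) [RHS](reindex_inj (@h_inj m _ H2m)).
apply: eq_big => [j|j _].
  by rewrite PoszD (@hG m _ H2m).
by rewrite (@Th m _ H2m X f g hb).
Qed.
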